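(* Let $\mathcal C$ be a normal category, let $X \xrightarrow{k} A \xleftarrow{s} B$ be an extremally epic cospan in $\mathcal C$, and let $f\colon X\to Y$, $g\colon B\to Y$. Then $f$ and $g$ commute relatively to $(k,s)$ if and only if the $(k,s)$-commutator $[f,g]_{k,s}$ is the zero subobject of $Y$.
   Context: A normal category is a pointed regular category in which every regular epimorphism is a normal epimorphism. Given a cospan $X \xrightarrow{k} A \xleftarrow{s} B$, morphisms $f\colon X\to Y$ and $g\colon B\to Y$ commute relatively to $(k,s)$ if there exists $\varphi\colon A\to Y$ with $\varphi\circ k=f$ and $\varphi\circ s=g$. The cospan is extremally epic if whenever $k=m\circ k'$ and $s=m\circ s'$ for some monomorphism $m\colon M\to A$, $m$ is an isomorphism. For such a cospan, let $\langle k,s\rangle\colon X+B\to A$ be the induced morphism and $\kappa_{k,s}\colon X\diamond_{k,s}B\to X+B$ its kernel; the $(k,s)$-commutator $[f,g]_{k,s}\leq Y$ is the image of $\langle f,g\rangle\circ\kappa_{k,s}$. *)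

(* Defs.v *)
Set Implicit Arguments.
Unset Strict Implicit.

Record Category := {
  ob :> Type;
  hom : ob -> ob -> Type;
  comp : forall a b c : ob, hom b c -> hom a b -> hom a c;
  idm : forall a : ob, hom a a;
  comp_assoc : forall a b c d (h : hom c d) (g : hom b c) (f : hom a b),
      comp h (comp g f) = comp (comp h g) f;
  comp_id_l : forall a b (f : hom a b), comp (idm b) f = f;
  comp_id_r : forall a b (f : hom a b), comp f (idm a) = f
}.

Arguments hom {C} a b : rename.
Arguments comp {C a b c} _ _ : rename.
Arguments idm {C} a : rename.
Notation "g \o f" := (comp g f) (at level 40, left associativity).

Section Defs.
Variable C : Category.

Definition mono {M Y : C} (m : hom M Y) : Prop :=
  forall (Z : C) (u v : hom Z M), m \o u = m \o v -> u = v.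

Definition is_iso {A B : C} (f : hom A B) : Prop :=
  exists g : hom B A, g \o f = idm A /\ f \o g = idm B.

Definition initial (I : C) : Prop :=
  forall A : C, exists u : hom I A, forall v : hom I A, v = u.
Definition terminal (T : C) : Prop :=
  forall A : C, exists u : hom A T, forall v : hom A T, v = u.
Definition zero_object (Z : C) : Prop := initial Z /\ terminal Z.

Definition pointed : Prop := exists Z : C, zero_object Z.

Definition zero_mor {A B : C} (f : hom A B) : Prop :=
  exists (Z : C) (u : hom A Z) (v : hom Z B), zero_object Z /\ f = v \o u.

Definition is_pullback {A B D P : C} (f : hom A D) (g : hom B D)
  (p1 : hom P A) (p2 : hom P B) : Prop :=
  f \o p1 = g \o p2 /\
  forall (Q : C) (q1 : hom Q A) (q2 : hom Q B), f \o q1 = g \o q2 ->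
    exists u : hom Q P, p1 \o u = q1 /\ p2 \o u = q2 /\
      forall u' : hom Q P, p1 \o u' = q1 -> p2 \o u' = q2 -> u' = u.

Definition finitely_complete : Prop :=
  (exists T : C, terminal T) /\
  forall (A B D : C) (f : hom A D) (g : hom B D),
    exists (P : C) (p1 : hom P A) (p2 : hom P B), is_pullback f g p1 p2.

Definition is_coequalizer {R A Q : C} (r1 r2 : hom R A) (q : hom A Q) : Prop :=
  q \o r1 = q \o r2 /\
  forall (W : C) (w : hom A W), w \o r1 = w \o r2 ->
    exists u : hom Q W, u \o q = w /\ forall u' : hom Q W, u' \o q = w -> u' = u.

Definition regular_epi {A Q : C} (q : hom A Q) : Prop :=
  exists (R : C) (r1 r2 : hom R A), is_coequalizer r1 r2 q.

Definition regular_category : Prop :=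
  finitely_complete /\
  (forall (A B : C) (f : hom A B) (R : C) (r1 r2 : hom R A),
      is_pullback f f r1 r2 -> exists (Q : C) (q : hom A Q), is_coequalizer r1 r2 q) /\
  (forall (A B D P : C) (f : hom A D) (g : hom B D) (p1 : hom P A) (p2 : hom P B),
      is_pullback f g p1 p2 -> regular_epi g -> regular_epi p1).

Definition is_kernel {K A B : C} (kk : hom K A) (f : hom A B) : Prop :=
  zero_mor (f \o kk) /\
  forall (W : C) (w : hom W A), zero_mor (f \o w) ->
    exists u : hom W K, kk \o u = w /\ forall u' : hom W K, kk \o u' = w -> u' = u.

Definition is_cokernel {A B Q : C} (q : hom B Q) (f : hom A B) : Prop :=
  zero_mor (q \o f) /\
  forall (W : C) (w : hom B W), zero_mor (w \o f) ->
    exists u : hom Q W, u \o q = w /\ forall u' : hom Q W, u' \o q = w -> u' = u.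

Definition normal_epi {B Q : C} (q : hom B Q) : Prop :=
  exists (A : C) (f : hom A B), is_cokernel q f.

Definition normal_category : Prop :=
  pointed /\ regular_category /\
  forall (B Q : C) (q : hom B Q), regular_epi q -> normal_epi q.

Definition is_coproduct {X B P : C} (i1 : hom X P) (i2 : hom B P) : Prop :=
  forall (W : C) (a : hom X W) (b : hom B W),
    exists u : hom P W, u \o i1 = a /\ u \o i2 = b /\
      forall u' : hom P W, u' \o i1 = a -> u' \o i2 = b -> u' = u.

Definition has_binary_coproducts : Prop :=
  forall X B : C, exists (P : C) (i1 : hom X P) (i2 : hom B P), is_coproduct i1 i2.

Definition is_image_factorization {A Y M : C} (h : hom A Y)
  (e : hom A M) (m : hom M Y) : Prop :=
  regular_epi e /\ mono m /\ h = m \o e.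

(* A subobject m : M >-> Y is the zero subobject iff it is isomorphic (as a
   subobject) to 0 >-> Y, i.e. iff M is a zero object. *)
Definition zero_subobject {M Y : C} (m : hom M Y) : Prop := zero_object M.

Definition commute_rel {X A B Y : C} (k : hom X A) (s : hom B A)
  (f : hom X Y) (g : hom B Y) : Prop :=
  exists phi : hom A Y, phi \o k = f /\ phi \o s = g.

Definition extremally_epic {X A B : C} (k : hom X A) (s : hom B A) : Prop :=
  forall (M : C) (m : hom M A) (k' : hom X M) (s' : hom B M),
    mono m -> k = m \o k' -> s = m \o s' -> is_iso m.

(* "[f,g]_{k,s} is the zero subobject of Y": for any coproduct X+B, the induced
   <k,s>, any kernel kappa of <k,s>, the induced <f,g>, and any image
   factorization of <f,g> o kappa, the image is the zero subobject.
   (All these data are unique up to isomorphism.) *)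
Definition rel_commutator_trivial {X A B Y : C} (k : hom X A) (s : hom B A)
  (f : hom X Y) (g : hom B Y) : Prop :=
  forall (P : C) (i1 : hom X P) (i2 : hom B P), is_coproduct i1 i2 ->
  forall ks : hom P A, ks \o i1 = k -> ks \o i2 = s ->
  forall fg : hom P Y, fg \o i1 = f -> fg \o i2 = g ->
  forall (K : C) (kappa : hom K P), is_kernel kappa ks ->
  forall (M : C) (e : hom K M) (m : hom M Y),
    is_image_factorization (fg \o kappa) e m -> zero_subobject m.

End Defs.

(* Main.v *)
Require Import Defs.
Set Implicit Arguments.

Section Helpers.
Variable C : Category.

Ltac rnorm := repeat rewrite <- comp_assoc.

Lemma eq2 {a b c d : C} {g1 : hom b d} {f1 : hom a b} {g2 : hom c d} {f2 : hom a c} :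
  g1 \o f1 = g2 \o f2 -> forall {z : C} (x : hom z a), g1 \o (f1 \o x) = g2 \o (f2 \o x).
Proof. intros H z x. rewrite !comp_assoc, H. reflexivity. Qed.

Definition epi {A Q : C} (q : hom A Q) : Prop :=
  forall (W : C) (u v : hom Q W), u \o q = v \o q -> u = v.

Lemma regular_epi_epi {A Q : C} {q : hom A Q} : regular_epi q -> epi q.
Proof.
  intros [R [r1 [r2 [Hc Hu]]]] W u v H.
  destruct (Hu W (u \o q)) as [x [_ Hx]].
  { rewrite <- !comp_assoc, Hc. reflexivity. }
  rewrite (Hx u eq_refl), (Hx v (eq_sym H)). reflexivity.
Qed.

Lemma epi_comp {A B D : C} {t : hom B D} {t' : hom A B} : epi t -> epi t' -> epi (t \o t').
Proof.
  intros H1 H2 W u v H. apply H1. apply H2. rewrite <- !comp_assoc. exact H.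
Qed.

Lemma zero_transfer {Z M : C} (t : hom M Z) (z : hom Z M) :
  zero_object Z -> z \o t = idm M -> zero_object M.
Proof.
  intros [Hin Hter] Hzt. split.
  - intros W. destruct (Hin W) as [uZ HuZ]. exists (uZ \o t). intros v.
    rewrite <- (comp_id_r v), <- Hzt, comp_assoc, (HuZ (v \o z)). reflexivity.
  - intros W. destruct (Hter W) as [uZ HuZ]. exists (z \o uZ). intros v.
    rewrite <- (comp_id_l v), <- Hzt, <- comp_assoc, (HuZ (t \o v)). reflexivity.
Qed.

Lemma zero_mor_compl {A B D : C} {h : hom A B} {x : hom B D} :
  zero_mor h -> zero_mor (x \o h).
Proof.
  intros [Z [u [v [HZ Heq]]]]. exists Z, u, (x \o v). split; auto.
  rewrite Heq, comp_assoc. reflexivity.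
Qed.

Lemma zero_mor_compr {A B D : C} {h : hom B D} {x : hom A B} :
  zero_mor h -> zero_mor (h \o x).
Proof.
  intros [Z [u [v [HZ Heq]]]]. exists Z, (u \o x), v. split; auto.
  rewrite Heq, comp_assoc. reflexivity.
Qed.

Lemma zero_obj_mor {A M Y : C} {e : hom A M} {m : hom M Y} :
  zero_object M -> zero_mor (m \o e).
Proof. intros H. exists M, e, m. auto. Qed.

Lemma image_zero {A M Y : C} {e : hom A M} {m : hom M Y} :
  zero_mor (m \o e) -> regular_epi e -> mono m -> zero_object M.
Proof.
  intros [Z [u [v [HZ Heq]]]] He Hm.
  pose proof HZ as [Hin Hter].
  destruct (Hin M) as [z _].
  destruct (Hin Y) as [y0 Hy0].
  assert (Hmz : m \o z = v) by (rewrite (Hy0 (m \o z)), (Hy0 v); reflexivity).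
  assert (Hez : e = z \o u).
  { apply Hm. rewrite Heq, comp_assoc, Hmz. reflexivity. }
  pose proof He as [R [r1 [r2 [Hc Hu]]]].
  destruct (Hu Z u) as [t [Ht _]].
  { destruct (Hter R) as [t0 Ht0]. rewrite (Ht0 (u \o r1)), (Ht0 (u \o r2)). reflexivity. }
  apply (@zero_transfer Z M t z HZ).
  apply (regular_epi_epi He). rewrite <- comp_assoc, Ht, <- Hez, comp_id_l. reflexivity.
Qed.

Lemma kernel_exists : pointed C -> finitely_complete C ->
  forall {P A : C} (f : hom P A), exists (K : C) (kk : hom K P), is_kernel kk f.
Proof.
  intros [Z HZ] [_ Hpb] P A f.
  pose proof HZ as [Hin Hter].
  destruct (Hin A) as [zA HzA].
  destruct (Hpb P Z A f zA) as [K [p1 [p2 [Hc Hu]]]].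
  exists K, p1. split.
  - exists Z, p2, zA. split; auto.
  - intros W w [Z' [u [v [HZ' Heq]]]].
    destruct HZ' as [Hin' _].
    destruct (Hin' Z) as [d _].
    destruct (Hin' A) as [a0 Ha0].
    assert (Hv : v = zA \o d) by (rewrite (Ha0 v), (Ha0 (zA \o d)); reflexivity).
    destruct (Hu W w (d \o u)) as [x [Hx1 [Hx2 Hx]]].
    { rewrite Heq, Hv, comp_assoc. reflexivity. }
    exists x. split; auto.
    intros u' Hu'. apply Hx; auto.
    destruct (Hter W) as [t0 Ht0]. rewrite (Ht0 (p2 \o u')), (Ht0 (d \o u)). reflexivity.
Qed.

Lemma image_exists : regular_category C ->
  forall {A Y : C} (h : hom A Y), exists (M : C) (e : hom A M) (m : hom M Y),
    is_image_factorization h e m.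
Proof.
  intros [[_ Hpb] [Hcoeq Hstab]] A Y h.
  destruct (Hpb A A Y h h) as [R [r1 [r2 Hker]]].
  destruct (Hcoeq A Y h R r1 r2 Hker) as [Q [q Hq]].
  pose proof Hq as [Hqc Hqu]. pose proof Hker as [Hkc Hku].
  destruct (Hqu Y h Hkc) as [m [Hmq _]].
  assert (Hqr : regular_epi q) by (exists R, r1, r2; exact Hq).
  exists Q, q, m. split; [exact Hqr | split; [| symmetry; exact Hmq]].
  intros Z u v Huv.
  destruct (Hpb Q Q Y m m) as [T [s1 [s2 HT]]].
  pose proof HT as [HTc HTu].
  destruct (Hpb T A Q s1 q) as [T1 [t [a HT1]]].
  pose proof (Hstab _ _ _ _ _ _ _ _ HT1 Hqr) as Ht.
  destruct (Hpb T1 A Q (s2 \o t) q) as [T2 [t' [b HT2]]].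
  pose proof (Hstab _ _ _ _ _ _ _ _ HT2 Hqr) as Ht'.
  destruct HT1 as [HT1c _]. destruct HT2 as [HT2c _].
  rewrite <- comp_assoc in HT2c.
  destruct (Hku T2 (a \o t') b) as [c [Hc1 [Hc2 _]]].
  { rewrite <- Hmq. rnorm. rewrite <- (eq2 HT1c), (eq2 HTc), HT2c. reflexivity. }
  assert (Hs : s1 = s2).
  { apply (epi_comp (regular_epi_epi Ht) (regular_epi_epi Ht')).
    rnorm. rewrite (eq2 HT1c), <- Hc1, (eq2 Hqc), Hc2, HT2c. reflexivity. }
  destruct (HTu Z u v Huv) as [w [Hw1 [Hw2 _]]].
  rewrite <- Hw1, <- Hw2, Hs. reflexivity.
Qed.

Lemma ext_regular {X A B P : C} {k : hom X A} {s : hom B A} (i1 : hom X P) (i2 : hom B P)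
  {ks : hom P A} : regular_category C -> extremally_epic k s ->
  ks \o i1 = k -> ks \o i2 = s -> regular_epi ks.
Proof.
  intros HR Hext H1 H2.
  destruct (image_exists HR ks) as [M [e [m [He [Hm Hf]]]]].
  destruct (Hext M m (e \o i1) (e \o i2) Hm) as [g [Hgm Hmg]].
  { rewrite <- H1, Hf, comp_assoc. reflexivity. }
  { rewrite <- H2, Hf, comp_assoc. reflexivity. }
  destruct He as [R [r1 [r2 [Hc Hu]]]].
  exists R, r1, r2. split.
  - rewrite Hf, <- !comp_assoc, Hc. reflexivity.
  - intros W w Hw. destruct (Hu W w Hw) as [x [Hx Hxu]].
    exists (x \o g). split.
    + rewrite Hf. rewrite comp_assoc, <- (comp_assoc x g m), Hgm, comp_id_r. exact Hx.
    + intros u' Hu'. rewrite Hf, comp_assoc in Hu'.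
      rewrite <- (Hxu _ Hu'), <- comp_assoc, Hmg, comp_id_r. reflexivity.
Qed.

End Helpers.

Theorem mainTheorem4 (C : Category) (HN : normal_category C)
  (Hcop : has_binary_coproducts C)
  (X A B Y : C) (k : hom X A) (s : hom B A)
  (Hext : extremally_epic k s) (f : hom X Y) (g : hom B Y) :
  commute_rel k s f g <-> rel_commutator_trivial k s f g.
Proof.
  destruct HN as [Hpt [HR Hnorm]].
  split.
  - intros [phi [Hk Hs]] P i1 i2 Hcp ks Hks1 Hks2 fg Hfg1 Hfg2 K kappa Hkap M e m [He [Hm Hfac]].
    unfold zero_subobject.
    apply (image_zero (A:=K) (Y:=Y) (e:=e) (m:=m)); auto.
    rewrite <- Hfac.
    destruct (Hcp Y f g) as [u [_ [_ Hu]]].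
    assert (Hfg : fg = phi \o ks).
    { rewrite (Hu fg Hfg1 Hfg2), (Hu (phi \o ks)); auto.
      - rewrite <- comp_assoc, Hks1. exact Hk.
      - rewrite <- comp_assoc, Hks2. exact Hs. }
    subst fg. rewrite <- comp_assoc. apply zero_mor_compl. apply Hkap.
  - intro Htriv.
    destruct (Hcop X B) as [P [i1 [i2 Hcp]]].
    destruct (Hcp A k s) as [ks [Hks1 [Hks2 _]]].
    destruct (Hcp Y f g) as [fg [Hfg1 [Hfg2 _]]].
    destruct (kernel_exists Hpt (proj1 HR) ks) as [K [kappa Hkap]].
    destruct (image_exists HR (fg \o kappa)) as [M [e [m Him]]].
    pose proof (Htriv P i1 i2 Hcp ks Hks1 Hks2 fg Hfg1 Hfg2 K kappa Hkap M e m Him) as HM.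
    unfold zero_subobject in HM.
    assert (Hz : zero_mor (fg \o kappa)).
    { destruct Him as [_ [_ Heq]]. rewrite Heq. apply zero_obj_mor. exact HM. }
    pose proof (ext_regular i1 i2 HR Hext Hks1 Hks2) as Hreg.
    destruct (Hnorm _ _ ks Hreg) as [A0 [h0 [Hc0 Hcu]]].
    destruct Hkap as [_ Hku].
    destruct (Hku A0 h0 Hc0) as [h' [Hh' _]].
    destruct (Hcu Y fg) as [phi [Hphi _]].
    { rewrite <- Hh', comp_assoc. apply zero_mor_compr. exact Hz. }
    exists phi. split.
    + rewrite <- Hks1, comp_assoc, Hphi. exact Hfg1.
    + rewrite <- Hks2, comp_assoc, Hphi. exact Hfg2.
Qed.
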